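(* Assume the focusing case $0<\mu_1\le\dots\le\mu_n$ (with $n\ge3$). Then there are infinitely many possible bifurcation parameters: for all but finitely many $k\in\mathbb N$, the equation $f(\beta)=\lambda_k$ has a unique solution $\beta\in(-\infty,\bar\beta)$.
   Context: Let $\Omega\subset\mathbb R^N$ ($N\le3$) be a smooth bounded domain whose principal Dirichlet eigenvalue of $-\Delta$ is less than $1$, and $\omega\in H_0^1(\Omega)$ the unique positive solution of $-\Delta\omega-\omega=-\omega^3$. Let $-1=\lambda_1<\lambda_2<\cdots\to\infty$ be the distinct eigenvalues of $-\Delta\psi-\psi=\lambda\omega^2\psi$, $\psi\in H_0^1(\Omega)$. Let $g(\beta)=1+\beta\sum_{j=1}^n\frac1{\mu_j-\beta}$, $f(\beta)=-1-\frac2{g(\beta)}$, and $\bar\beta$ the unique zero of $g$ in $(-\infty,0)$. A possible bifurcation parameter is a $\beta\in(-\infty,\bar\beta)$ with $f(\beta)=\lambda_k$ for some $k$ (equivalently, for which the linearization of the system $-\Delta u_j-u_j=\mu_ju_j^3+\beta\sum_{k\ne j}u_k^2u_j$ at the synchronized solution has nontrivial kernel). *)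

(* Defs.v *)
From HB Require Import structures.
From mathcomp Require Import all_boot all_order all_algebra.
From mathcomp Require Import reals.
Set Implicit Arguments. Unset Strict Implicit. Unset Printing Implicit Defensive.
Import Order.TTheory GRing.Theory Num.Theory.
Local Open Scope ring_scope.

Definition gfun (R : realType) (n : nat) (mu : 'I_n -> R) (beta : R) : R :=
  1 + beta * \sum_(j < n) (mu j - beta)^-1.

Definition ffun (R : realType) (n : nat) (mu : 'I_n -> R) (beta : R) : R :=
  - 1 - 2 / gfun mu beta.

(* Abstract properties of the sequence of distinct eigenvalues
   -1 = lambda_1 < lambda_2 < ... -> +oo of -Δψ - ψ = λ ω^2 ψ.
   lam k represents lambda_{k+1} (0-based indexing). *)
Definition distinct_eigen_seq (R : realType) (lam : nat -> R) : Prop :=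
  [/\ lam 0%N = -1,
      (forall k, lam k < lam k.+1) &
      (forall M : R, exists N : nat, forall k, (N <= k)%N -> M < lam k)].

(* Main.v *)
Require Import Defs.
From HB Require Import structures.
From mathcomp Require Import all_boot all_order all_algebra.
From mathcomp Require Import reals.
From mathcomp Require Import all_classical all_analysis.
From mathcomp Require Import ring lra.
Import Order.TTheory GRing.Theory Num.Theory.
Import numFieldNormedType.Exports.
Local Open Scope ring_scope.

Section S.
Variables (R : realType) (n : nat) (mu : 'I_n -> R).
Hypothesis mupos : forall j, 0 < mu j.

Lemma gcont (x : R) : x < 0 -> {for x, continuous (gfun mu)}.
Proof.
move=> x0.
have H : forall s : seq 'I_n, {for x, continuous (fun b : R => \sum_(j <- s) (mu j - b)^-1)}.
  elim=> [|a s IH].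
    have -> : (fun b : R => \sum_(j <- [::]) (mu j - b)^-1) = fun=> 0.
      by apply/funext=> b; rewrite big_nil.
    exact: cvg_cst.
  have -> : (fun b : R => \sum_(j <- a :: s) (mu j - b)^-1) =
     (fun b => (mu a - b)^-1) + (fun b : R => \sum_(j <- s) (mu j - b)^-1).
    by apply/funext=> b; rewrite big_cons.
  apply: continuousD => //.
  apply: continuousV.
    by rewrite subr_eq0 gt_eqF // (lt_trans x0).
  apply: continuousB; first exact: cvg_cst.
  exact: cvg_id.
rewrite /gfun.
apply: continuousD; first exact: cvg_cst.
apply: continuousM; first exact: cvg_id.
exact: H.
Qed.

Lemma gmono (a b : R) : (0 < n)%N -> a < b -> b < 0 -> gfun mu a < gfun mu b.
Proof.
move=> n0 ab b0; rewrite /gfun ltrD2l !mulr_sumr.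
apply: ltr_sum.
  by apply/hasP; exists (Ordinal n0); rewrite ?mem_index_enum.
move=> j _.
have a0 : a < 0 by lra.
have hm := mupos j.
have da : 0 < mu j - a by lra.
have db : 0 < mu j - b by lra.
rewrite ltr_pdivrMr // mulrAC ltr_pdivlMr //.
nra.
Qed.

Lemma glow (a : R) : a < 0 ->
  gfun mu a <= 1 - n%:R + (\sum_(j < n) mu j) / (- a).
Proof.
move=> a0; rewrite /gfun mulr_sumr -addrA lerD2l.
rewrite mulr_suml -[n in - n%:R]card_ord -sumr_const -sumrN -big_split /=.
apply: ler_sum=> j _.
have hm := mupos j.
have da : 0 < mu j - a by lra.
have -> : a * (mu j - a)^-1 = -1 + mu j / (mu j - a).
  by field; rewrite gt_eqF.
rewrite lerD2l ler_pM2l // lef_pV2 ?posrE; lra.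
Qed.
End S.

Theorem lemma3p3 (R : realType) (n : nat) (mu : 'I_n -> R) (lam : nat -> R)
  (betabar : R) :
  (3 <= n)%N ->
  (forall j, 0 < mu j) ->
  (forall i j : 'I_n, (i <= j)%N -> mu i <= mu j) ->
  distinct_eigen_seq lam ->
  betabar < 0 -> gfun mu betabar = 0 ->
  exists K : nat, forall k : nat, (K <= k)%N ->
    exists! beta : R, beta < betabar /\ ffun mu beta = lam k.
Proof.
move=> n3 mup _ [_ _ lamoo] bb0 gbb.
have n0 : (0 < n)%N by apply: leq_trans n3.
have n1 : 2%:R <= n%:R - 1 :> R.
  have : 3%:R <= n%:R :> R by rewrite ler_nat.
  lra.
have [N HN] := lamoo (-1 + 2 / (n%:R - 1)).
exists N => k /HN lk.
set L := lam k + 1.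
have hL : 2 / (n%:R - 1) < L by rewrite /L; lra.
have n1p : 0 < n%:R - 1 :> R by lra.
have Lp : 0 < L by apply: lt_trans hL; apply: divr_gt0 => //; lra.
set t := - (2 / L).
have t0 : t < 0 by rewrite /t oppr_lt0 divr_gt0.
have t1 : 1 - n%:R < t.
  rewrite /t ltrNr opprB ltr_pdivrMr //.
  by rewrite -ltr_pdivrMl // mulrC.
set S := \sum_(j < n) mu j.
have S0 : 0 <= S by apply: sumr_ge0 => j _; exact/ltW.
set D := t - (1 - n%:R).
have D0 : 0 < D by rewrite /D subr_gt0.
set a := Num.min (betabar - 1) (- (S / D) - 1).
have ab : a < betabar by rewrite /a gt_min; apply/orP; left; lra.
have aSD : a <= - (S / D) - 1 by rewrite /a ge_min lexx orbT.
have a0 : a < 0 by lra.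
have ga : gfun mu a < t.
  have hg := @glow _ _ _ mup _ a0; rewrite -/S in hg.
  have : S / (- a) < D.
    rewrite ltr_pdivrMr ?oppr_gt0 //.
    have SD : S / D * D = S by rewrite mulfVK // gt_eqF.
    have : S / D < - a by lra.
    by rewrite -(ltr_pM2r D0) SD mulrC.
  rewrite /D; lra.
have [c cI gc] : exists2 c, c \in `[a, betabar] & gfun mu c = t.
  apply: IVT; first exact: ltW.
    apply: continuous_in_subspaceT => x /[!inE] xI.
    apply: gcont => //.
    by apply: le_lt_trans bb0; rewrite (itvP xI).
  rewrite gbb ge_min le_max (ltW ga) /= orbC.
  by rewrite (ltW t0).
have fc : ffun mu c = lam k.
  rewrite /ffun gc /t invrN mulrN invf_div mulrA mulrAC mulfV ?mul1r /L //.
  lra.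
have cb : c < betabar.
  rewrite lt_neqAle (itvP cI) andbT; apply/eqP => ce.
  by move: gc; rewrite ce gbb => t0'; move: t0; rewrite -t0' ltxx.
exists c; split; first by split.
move=> y [yb fy].
have gy0 : gfun mu y < 0 by rewrite -gbb; apply: (@gmono _ _ _ mup) => //.
have gyc : gfun mu y = gfun mu c.
  move: fy; rewrite -fc /ffun => /eqP.
  rewrite (inj_eq (addrI _)) (inj_eq oppr_inj) => /eqP.
  rewrite !(mulrC 2) => /mulIf H.
  by apply: invr_inj; apply: H; rewrite pnatr_eq0.
case: (ltgtP y c) => // [yc|cy].
  by have := @gmono _ _ _ mup _ _ n0 yc (lt_trans cb bb0); rewrite gyc ltxx.
by have := @gmono _ _ _ mup _ _ n0 cy (lt_trans yb bb0); rewrite gyc ltxx.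
Qed.
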